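(* Let $G$ be a graph such that either $G$ has more than one connected component containing an edge, or $G$ has a connected component containing at least three vertices. Then $\mathcal{Z}^{\mathrm{TE}}_+(G)$ is not isomorphic to any tree.
   Context: PSD forcing: vertices are colored blue or white; if $B$ is the current set of blue vertices, $C$ a connected component of $G-B$, and $u$ a blue vertex with $N_G(u)\cap V(C)=\{v\}$, then $u$ may force $v$ to become blue. A PSD forcing set is a set of initially blue vertices from which repeated application of this rule turns every vertex blue; $\mathrm{Z}_+(G)$ is the minimum size of a PSD forcing set. $\mathcal{Z}^{\mathrm{TE}}_+(G)$ has as vertices the minimum PSD forcing sets of $G$, with $S_1S_2$ an edge iff $S_1\setminus S_2=\{v_1\}$ and $S_2\setminus S_1=\{v_2\}$ for some vertices $v_1,v_2$. *)

(* Defs.v *)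
From mathcomp Require Import all_boot.
Set Implicit Arguments. Unset Strict Implicit. Unset Printing Implicit Defensive.

(* A finite simple graph: vertex type T : finType, adjacency e : rel T,
   assumed symmetric and irreflexive (hypotheses of the theorem). *)

Section PSD.
Variables (T : finType) (e : rel T).

Definition rel_avoid (B : {set T}) : rel T :=
  fun x y => [&& e x y, x \notin B & y \notin B].

Definition same_comp_avoid (B : {set T}) (v w : T) : bool :=
  [&& v \notin B, w \notin B & connect (rel_avoid B) v w].

Definition psd_force (B : {set T}) (u v : T) : Prop :=
  [/\ u \in B, v \notin B, e u v &
      forall w, same_comp_avoid B v w -> e u w -> w = v].

Inductive psd_reach (S : {set T}) : {set T} -> Prop :=
| psd_reach_refl : psd_reach S S
| psd_reach_step B u v : psd_reach S B -> psd_force B u v -> psd_reach S (v |: B).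

Definition psd_forcing_set (S : {set T}) : Prop := psd_reach S [set: T].

Definition min_psd_forcing_set (S : {set T}) : Prop :=
  psd_forcing_set S /\ forall S', psd_forcing_set S' -> #|S| <= #|S'|.

Definition te_adj : rel {set T} :=
  fun S1 S2 => [exists v1, exists v2, (S1 :\: S2 == [set v1]) && (S2 :\: S1 == [set v2])].

End PSD.

(* A (finite) graph given by a vertex predicate V on a type U and an
   adjacency relation e (only edges between vertices of V are relevant). *)
Section Tree.
Variables (U : eqType) (V : U -> Prop) (e : rel U).

Definition graph_connected : Prop :=
  forall x y, V x -> V y ->
    exists p : seq U, [/\ path e x p, last x p = y & forall z, z \in p -> V z].

Definition graph_has_cycle : Prop :=
  exists p : seq U, [/\ uniq p, 3 <= size p, cycle e p & forall z, z \in p -> V z].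

Definition is_tree : Prop :=
  (exists x, V x) /\ graph_connected /\ ~ graph_has_cycle.

End Tree.

Definition TE_is_tree (T : finType) (e : rel T) : Prop :=
  is_tree (min_psd_forcing_set e) (@te_adj T).

(* Main.v *)
Require Import Defs.
From mathcomp Require Import all_boot.
From Stdlib Require Import Classical.
Set Implicit Arguments. Unset Strict Implicit. Unset Printing Implicit Defensive.

Section Proofs.
Variables (T : finType) (e : rel T).
Hypothesis e_sym : symmetric e.
Hypothesis e_irr : irreflexive e.

Lemma conn_ind (r : rel T) (P : T -> Prop) x y :
  P x -> (forall a b, P a -> r a b -> P b) -> connect r x y -> P y.
Proof.
move=> Px step /connectP [p pth ->]; elim: p x Px pth => //= a p IH x Px /andP[rxa pth].
exact: IH (step _ _ Px rxa) pth.
Qed.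

Lemma conn_sub (r r' : rel T) x y :
  (forall a b, connect r x a -> r a b -> r' a b) -> connect r x y -> connect r' x y.
Proof.
move=> H cxy.
suff : connect r x y /\ connect r' x y by case.
apply: (@conn_ind r (fun a => connect r x a /\ connect r' x a) x y) => //.
move=> a b [c1 c2] rab; split.
  exact: connect_trans c1 (connect1 rab).
exact: connect_trans c2 (connect1 (H _ _ c1 rab)).
Qed.

Lemma rel_avoid_sym B : symmetric (rel_avoid e B).
Proof. by move=> x y; rewrite /rel_avoid e_sym; case: (x \in B); case: (y \in B); rewrite ?andbF. Qed.

Lemma rel_avoid_e B : subrel (rel_avoid e B) e.
Proof. by move=> x y /and3P[]. Qed.

Lemma same_comp_trans B x y z :
  same_comp_avoid e B x y -> same_comp_avoid e B y z -> same_comp_avoid e B x z.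
Proof.
case/and3P=> hx hy c1 /and3P[_ hz c2]; apply/and3P; split => //.
exact: connect_trans c1 c2.
Qed.

Lemma same_comp_sym B x y :
  same_comp_avoid e B x y -> same_comp_avoid e B y x.
Proof.
case/and3P=> hx hy c; apply/and3P; split => //.
by rewrite (sym_connect_sym (@rel_avoid_sym B)).
Qed.

Lemma same_comp_e B x y : same_comp_avoid e B x y -> connect e x y.
Proof.
case/and3P=> _ _; apply: conn_sub => a b _; exact: rel_avoid_e.
Qed.

Lemma comp_single (B : {set T}) v w :
  (forall c, e v c -> c \in B) -> same_comp_avoid e B v w -> w = v.
Proof.
move=> Hn /and3P[_ _]; apply: (@conn_ind _ (fun a => a = v)) => // a b -> /and3P[evb _ hb].
by move: (Hn _ evb); rewrite (negbTE hb).
Qed.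

Lemma reach_trans S B C : psd_reach e S B -> psd_reach e B C -> psd_reach e S C.
Proof.
move=> h1 h2; elim: h2 => // B' u v _ IH f; exact: psd_reach_step IH f.
Qed.

Lemma reach_mono S B (S' : {set T}) : psd_reach e S B -> S \subset S' -> psd_reach e S' (B :|: S').
Proof.
move=> h sub; elim: h => [|B0 u v _ IH [uB vB euv uniq]].
  by rewrite (setUidPr sub); constructor.
case: (boolP (v \in S')) => vS.
  by rewrite -setUA (setUidPr _) ?sub1set ?inE ?vS ?orbT.
rewrite -setUA; apply: (psd_reach_step (u:=u) IH); split.
- by rewrite !inE uB.
- by rewrite !inE negb_or vB.
- exact: euv.
move=> w /and3P[hv hw c] euw; apply: uniq => //; apply/and3P; split => //.
  by move: hw; rewrite inE negb_or => /andP[].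
move: c; apply: conn_sub => a b _ /and3P[eab ha hb]; apply/and3P; split => //.
  by move: ha; rewrite inE negb_or => /andP[].
by move: hb; rewrite inE negb_or => /andP[].
Qed.

Lemma forcing_mono S (S' : {set T}) : psd_forcing_set e S -> S \subset S' -> psd_forcing_set e S'.
Proof. by move=> h sub; move: (reach_mono h sub); rewrite setTU. Qed.


Definition swap (S : {set T}) u v := v |: (S :\ u).

Lemma swap_force S u v : psd_force e S u v -> psd_force e (swap S u v) v u.
Proof.
case=> uS vS euv uniq.
have uv : u != v by apply/eqP=> E; move: vS; rewrite -E uS.
split.
- by rewrite !inE eqxx.
- by rewrite !inE eqxx (negbTE uv).
- by rewrite e_sym.
move=> w /and3P[hu hw c] evw.
have P : forall a, connect (rel_avoid e (swap S u v)) u a ->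
   a = u \/ ~~ connect (rel_avoid e S) v a.
  move=> a; apply: (@conn_ind _ (fun a => a = u \/ ~~ connect (rel_avoid e S) v a)); first by left.
  move=> a0 b Pa /and3P[eab ha hb].
  case: (eqVneq b u) => [->|bu]; first by left.
  right; apply/negP => cvb.
  have bS : b \notin S by move: hb; rewrite !inE negb_or (negbTE bu) /= => /andP[_].
  have bv : b != v by move: hb; rewrite !inE negb_or => /andP[].
  case: (eqVneq a0 u) => [E|a0u].
    subst a0; have := uniq b; rewrite /same_comp_avoid vS bS cvb eab => /(_ isT isT) E.
    by rewrite E eqxx in bv.
  case: Pa => [E|nc]; first by rewrite E eqxx in a0u.
  have aS : a0 \notin S.
    by move: ha; rewrite !inE negb_or a0u /= => /andP[_].
  move/negP: nc; apply; apply: connect_trans cvb (connect1 _).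
  by rewrite /rel_avoid e_sym eab bS aS.
case: (P w c) => // nc.
case: (eqVneq w u) => [->//|wu].
have wS : w \notin S by move: hw; rewrite !inE negb_or (negbTE wu) /= => /andP[_].
by move/negP: nc; case; apply: connect1; rewrite /rel_avoid evw vS wS.
Qed.

Lemma swap_forcing S u v : psd_forcing_set e S -> psd_force e S u v ->
  psd_forcing_set e (swap S u v).
Proof.
move=> hS f; have f' := swap_force f.
have uS : u \in S by case: f.
have r1 := psd_reach_step (psd_reach_refl e (swap S u v)) f'.
rewrite /psd_forcing_set; apply: reach_trans r1 _.
have -> : u |: swap S u v = v |: S.
  apply/setP=> z; rewrite !inE; case: (eqVneq z u) => [->|]; by rewrite ?uS ?orbT.
exact: forcing_mono hS (subsetUr [set v] S).
Qed.

Lemma card_swap (S : {set T}) u v : u \in S -> v \notin S -> #|swap S u v| = #|S|.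
Proof.
move=> uS vS; rewrite /swap cardsU1 !inE negb_and negbK vS orbT add1n.
by rewrite (cardsD1 u S) uS.
Qed.

Lemma swap_min S u v : min_psd_forcing_set e S -> psd_force e S u v ->
  min_psd_forcing_set e (swap S u v).
Proof.
case=> hS m f; split; first exact: swap_forcing.
case: f => uS vS _ _; by rewrite card_swap.
Qed.


Lemma comp_force S d : psd_forcing_set e S -> d \notin S ->
  exists y x, psd_force e S y x /\ same_comp_avoid e S d x.
Proof.
move=> hS dS.
suff G : forall B, psd_reach e S B ->
   (forall w, same_comp_avoid e S d w -> w \notin B) \/
   exists y x, psd_force e S y x /\ same_comp_avoid e S d x.
  case: (G _ hS) => [H|//].
  by have := H d; rewrite /same_comp_avoid dS connect0 inE => /(_ isT).
move=> B; elim=> [|B0 u v _ IH [uB vB euv uq]].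
  by left=> w /and3P[].
case: IH => [L|R]; last by right.
case: (boolP (same_comp_avoid e S d v)) => dv; last first.
  left=> w sw; rewrite !inE negb_or L // andbT; apply/eqP=> E; subst w.
  by rewrite sw in dv.
have vS : v \notin S by case/and3P: dv.
right; exists u, v; split => //.
have uS : u \in S.
  case: (boolP (u \in S)) => // uS'.
  have : same_comp_avoid e S d u.
    apply: same_comp_trans dv _; rewrite /same_comp_avoid vS uS' /=.
    by apply: connect1; rewrite /rel_avoid e_sym euv vS uS'.
  by move/L; rewrite uB.
split => // w sw euw; apply: uq => //.
have inD : forall a, connect (rel_avoid e S) v a -> a \notin S -> a \notin B0.
  move=> a ca aS; apply: L; apply: same_comp_trans dv _.
  by rewrite /same_comp_avoid vS aS ca.
case/and3P: sw => _ wS c; rewrite /same_comp_avoid vB inD //=.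
move: c; apply: conn_sub => a b ca; case/and3P => eab aS bS.
rewrite /rel_avoid eab inD //= inD //.
apply: (connect_trans ca); apply: connect1; by rewrite /rel_avoid eab aS bS.
Qed.

Lemma forcing_setT : psd_forcing_set e [set: T].
Proof. exact: psd_reach_refl. Qed.

Lemma ex_min : exists S, min_psd_forcing_set e S.
Proof.
suff G : forall n (S : {set T}), #|S| <= n -> psd_forcing_set e S -> exists S0, min_psd_forcing_set e S0.
  exact: (G _ _ (leqnn _) forcing_setT).
elim=> [|n IH] S cS hS.
  exists S; split => // S' _; by apply: leq_trans cS _.
case: (classic (forall S', psd_forcing_set e S' -> #|S| <= #|S'|)) => H.
  by exists S.
have [S' HS'] := not_all_ex_not _ _ H.
have [h1 h2] : psd_forcing_set e S' /\ ~ (#|S| <= #|S'|).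
  split; first by apply: NNPP => nf; apply: HS' => f; case: (nf f).
  by move=> c; apply: HS' => _.
apply: (IH S') => //.
by move/negP: h2; rewrite -ltnNge => lt; rewrite -ltnS; apply: leq_trans lt cS.
Qed.


Lemma edge_force S a b : min_psd_forcing_set e S -> e a b ->
  exists y x, psd_force e S y x /\ connect e a x.
Proof.
case=> hS m eab.
case: (classic (exists d, connect e a d /\ d \notin S)) => [[d [ad dS]]|nd].
  have [y [x [f sx]]] := comp_force hS dS.
  exists y, x; split=> //; exact: connect_trans ad (same_comp_e sx).
exfalso.
have inS : forall d, connect e a d -> d \in S.
  move=> d ad; case: (boolP (d \in S)) => // dS; case: nd; by exists d.
have ab : a != b by apply/eqP=> E; subst; rewrite e_irr in eab.
have bS : b \in S := inS b (connect1 eab).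
have f : psd_force e (S :\ b) a b.
  split.
  - by rewrite !inE ab inS.
  - by rewrite !inE eqxx.
  - exact: eab.
  move=> w sw _; apply: (comp_single _ sw) => c ebc.
  rewrite !inE inS ?andbT; last exact: connect_trans (connect1 eab) (connect1 ebc).
  by apply/eqP=> E; subst; rewrite e_irr in ebc.
have r : psd_forcing_set e (S :\ b).
  rewrite /psd_forcing_set; apply: reach_trans (psd_reach_step (psd_reach_refl _ _) f) _.
  by rewrite setD1K.
by have := m _ r; rewrite (cardsD1 b S) bS add1n ltnn.
Qed.


Lemma te_adjI (A B : {set T}) a b : a \in A -> a \notin B -> b \in B -> b \notin A ->
  (forall z, z != a -> z != b -> (z \in A) = (z \in B)) -> te_adj A B.
Proof.
move=> aA aB bB bA H; apply/existsP; exists a; apply/existsP; exists b.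
apply/andP; split; apply/eqP/setP=> z; rewrite !inE.
- case: (eqVneq z a) => [->|za]; first by rewrite aA aB.
  case: (eqVneq z b) => [->|zb]; first by rewrite (negbTE bA) andbF.
  by rewrite H //; case: (z \in B).
- case: (eqVneq z b) => [->|zb]; first by rewrite bB bA.
  case: (eqVneq z a) => [->|za]; first by rewrite (negbTE aB) andbF.
  by rewrite H //; case: (z \in B).
Qed.

Lemma te_adj_sym (A B : {set T}) : te_adj A B -> te_adj B A.
Proof.
case/existsP=> a /existsP[b /andP[h1 h2]].
by apply/existsP; exists b; apply/existsP; exists a; rewrite h1 h2.
Qed.

Lemma te_swap (S : {set T}) u v : u \in S -> v \notin S -> te_adj S (swap S u v).
Proof.
move=> uS vS; have uv : u != v by apply/eqP=> E; move: vS; rewrite -E uS.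
apply: (te_adjI (a := u) (b := v)) => //; rewrite ?inE ?eqxx ?(negbTE uv) //=.
by move=> z zu zv; rewrite !inE (negbTE zu) (negbTE zv).
Qed.

Lemma neq_wit (A B : {set T}) z : z \in A -> z \notin B -> A != B.
Proof. by move=> zA zB; apply/eqP=> E; move: zB; rewrite -E zA. Qed.

Lemma cyc3 A B C : min_psd_forcing_set e A -> min_psd_forcing_set e B ->
  min_psd_forcing_set e C -> te_adj A B -> te_adj B C -> te_adj C A ->
  A != B -> B != C -> A != C -> graph_has_cycle (min_psd_forcing_set e) (@te_adj T).
Proof.
move=> mA mB mC ab bc ca nab nbc nac; exists [:: A; B; C]; split => //.
- by rewrite /= !inE negb_or nab nac nbc.
- by rewrite /= ab bc ca.
by move=> z; rewrite !inE => /or3P[] /eqP ->.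
Qed.

Lemma cyc4 A B C D : min_psd_forcing_set e A -> min_psd_forcing_set e B ->
  min_psd_forcing_set e C -> min_psd_forcing_set e D ->
  te_adj A B -> te_adj B C -> te_adj C D -> te_adj D A ->
  A != B -> A != C -> A != D -> B != C -> B != D -> C != D ->
  graph_has_cycle (min_psd_forcing_set e) (@te_adj T).
Proof.
move=> mA mB mC mD ab bc cd da nab nac nad nbc nbd ncd; exists [:: A; B; C; D]; split => //.
- by rewrite /= !inE !negb_or nab nac nad nbc nbd ncd.
- by rewrite /= ab bc cd da.
by move=> z; rewrite !inE => /or4P[] /eqP ->.
Qed.


Lemma notin_swap (S : {set T}) y x z : z \notin swap S y x -> z != y -> z \notin S.
Proof. by rewrite !inE negb_or => /andP[_]; rewrite negb_and negbK => /orP[/eqP->|]; rewrite ?eqxx. Qed.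

Lemma case2 u1 v1 u2 v2 : e u1 v1 -> e u2 v2 -> ~~ connect e u1 u2 ->
  graph_has_cycle (min_psd_forcing_set e) (@te_adj T).
Proof.
move=> e1 e2 nc.
have [S mS] := ex_min.
have [y1 [x1 [f1 c1]]] := edge_force mS e1.
have [y2 [x2 [f2 c2]]] := edge_force mS e2.
have [y1S x1S e11 uq1] := f1.
have [y2S x2S e22 uq2] := f2.
have cy1 : connect e u1 y1 by apply: connect_trans c1 (connect1 _); rewrite e_sym.
have cy2 : connect e u2 y2 by apply: connect_trans c2 (connect1 _); rewrite e_sym.
have sep : forall a b, connect e u1 a -> connect e u2 b -> (a == b) = false.
  move=> a b ca cb; apply/eqP=> E; subst b; case/negP: nc; apply: connect_trans ca _.
  by rewrite (sym_connect_sym e_sym).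
have d1 := sep _ _ c1 c2. have d2 := sep _ _ cy1 cy2.
have d3 := sep _ _ c1 cy2. have d4 := sep _ _ cy1 c2.
have d5 : (x1 == y1) = false by apply/eqP=> E; move: x1S; rewrite E y1S.
have d6 : (x2 == y2) = false by apply/eqP=> E; move: x2S; rewrite E y2S.
have d1' : (x2 == x1) = false by rewrite eq_sym.
have d2' : (y2 == y1) = false by rewrite eq_sym.
have d3' : (y2 == x1) = false by rewrite eq_sym.
have d4' : (x2 == y1) = false by rewrite eq_sym.
have d5' : (y1 == x1) = false by rewrite eq_sym.
have d6' : (y2 == x2) = false by rewrite eq_sym.
have nx1 := negbTE x1S. have nx2 := negbTE x2S.
have D := (d1, d2, d3, d4, d5, d6, d1', d2', d3', d4', d5', d6', y1S, y2S, nx1, nx2).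
set S1 := swap S y1 x1.
have f12 : psd_force e S1 y2 x2.
  split.
  - by rewrite /S1 /swap !inE ?D.
  - by rewrite /S1 /swap !inE ?D.
  - exact: e22.
  move=> w sw ew; apply: uq2 => //.
  have far : forall a, connect e x2 a -> a != y1.
    move=> a ca; apply/negbT; rewrite eq_sym; apply: sep cy1 (connect_trans c2 ca).
  case/and3P: sw => _ wS1 cw.
  have cwe : connect e x2 w by move: cw; apply: conn_sub => a b _ /and3P[].
  rewrite /same_comp_avoid x2S (notin_swap wS1 (far w cwe)) /=.
  move: cw; apply: conn_sub => a b ca; case/and3P => eab aS bS.
  have cae : connect e x2 a by move: ca; apply: conn_sub => a' b' _ /and3P[].
  rewrite /rel_avoid eab (notin_swap aS (far a cae)) (notin_swap bS) //.
  by apply: far; apply: connect_trans cae (connect1 eab).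
set S12 := swap S1 y2 x2.
set S2 := swap S y2 x2.
have m1 := swap_min mS f1.
have m12 := swap_min m1 f12.
have m2 := swap_min mS f2.
have [y2S1 x2S1 _ _] := f12.
apply: (cyc4 mS m1 m12 m2).
- exact: te_swap.
- exact: te_swap.
- apply: (te_adjI (a := x1) (b := y1)); rewrite /S12 /S1 /S2 /swap; try by rewrite !inE ?eqxx ?D.
  by move=> z zx zy; rewrite !inE (negbTE zx) (negbTE zy).
- exact/te_adj_sym/te_swap.
- rewrite eq_sym; apply: (neq_wit (z := x1)); by rewrite /S12 /S1 /S2 /swap ?inE ?eqxx ?D.
- rewrite eq_sym; apply: (neq_wit (z := x2)); by rewrite /S12 /S1 /S2 /swap ?inE ?eqxx ?D.
- rewrite eq_sym; apply: (neq_wit (z := x2)); by rewrite /S12 /S1 /S2 /swap ?inE ?eqxx ?D.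
- rewrite eq_sym; apply: (neq_wit (z := x2)); by rewrite /S12 /S1 /S2 /swap ?inE ?eqxx ?D.
- apply: (neq_wit (z := x1)); by rewrite /S12 /S1 /S2 /swap ?inE ?eqxx ?D.
- apply: (neq_wit (z := x1)); by rewrite /S12 /S1 /S2 /swap ?inE ?eqxx ?D.
Qed.


Lemma neqF (a b : T) : a != b -> ((a == b) = false) * ((b == a) = false).
Proof. by move=> h; split; [exact: negbTE | rewrite eq_sym; exact: negbTE]. Qed.

Lemma case1 x0 : 3 <= #|[set y | connect e x0 y]| -> forall n S u v,
  min_psd_forcing_set e S -> psd_force e S u v -> connect e x0 v ->
  #|[set a | same_comp_avoid e S v a]| <= n ->
  graph_has_cycle (min_psd_forcing_set e) (@te_adj T).
Proof.
move=> K3; elim=> [|n IH] S u v mS f cv.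
  have vS : v \notin S by case: f.
  have h : v \in [set a | same_comp_avoid e S v a] by rewrite inE /same_comp_avoid vS connect0.
  by rewrite leqn0 cards_eq0 => /eqP E; move: h; rewrite E inE.
move=> hc; have [uS vS euv uq] := f.
have uv : u != v by apply/eqP=> E; move: vS; rewrite -E uS.
have vC : v \in [set a | same_comp_avoid e S v a] by rewrite inE /same_comp_avoid vS connect0.
case: (classic (exists x1, same_comp_avoid e S v x1 /\ x1 != v)) => [[x1 [sx1 x1v]]|nC].
  have m1 := swap_min mS f.
  set S1 := swap S u v.
  have x1S : x1 \notin S by case/and3P: sx1.
  have x1S1 : x1 \notin S1 by rewrite /S1 /swap !inE negb_or x1v /= negb_and x1S orbT.
  have [y [x [f' sx]]] := comp_force m1.1 x1S1.
  apply: (IH S1 y x m1 f').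
    exact: connect_trans cv (connect_trans (same_comp_e sx1) (same_comp_e sx)).
  have claim : forall a, same_comp_avoid e S1 x1 a -> same_comp_avoid e S v a && (a != v).
    move=> a /and3P[_ _ ca].
    apply: (@conn_ind _ (fun a => is_true (same_comp_avoid e S v a && (a != v)))) ca.
      by rewrite sx1 x1v.
    move=> a0 b /andP[sa av] /and3P[eab _ bS1].
    have bv : b != v by apply/eqP=> E; move: bS1; rewrite E /S1 /swap !inE eqxx.
    have bu : b != u.
      apply/eqP=> E; subst b; have := uq a0 sa; rewrite e_sym eab => /(_ isT) E.
      by rewrite E eqxx in av.
    have bS := notin_swap bS1 bu.
    have aS : a0 \notin S by case/and3P: sa.
    rewrite bv andbT; apply: same_comp_trans sa _; rewrite /same_comp_avoid bS aS /=.
    by apply: connect1; rewrite /rel_avoid eab aS bS.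
  have sub : [set a | same_comp_avoid e S1 x a] \subset [set a | same_comp_avoid e S v a] :\ v.
    apply/subsetP=> a; rewrite !inE => sa.
    by have /andP[h1 h2] := claim a (same_comp_trans sx sa); rewrite h2 h1.
  rewrite -ltnS; apply: (leq_trans _ hc); apply: leq_ltn_trans (subset_leq_card sub) _.
  by rewrite (cardsD1 v [set a | same_comp_avoid e S v a]) vC add1n ltnSn.
have Hc : forall a, same_comp_avoid e S v a -> a = v.
  move=> a sa; apply: NNPP => av; apply: nC; exists a; split=> //; exact/eqP.
have nb : forall c, e v c -> c \in S.
  move=> c evc; case: (boolP (c \in S)) => // cS.
  have := Hc c; rewrite /same_comp_avoid vS cS /= connect1 ?(E : true) => [/(_ isT) E|].
    by subst c; rewrite e_irr in evc.
  by rewrite /rel_avoid evc vS cS.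
have [uv1 uv2] := neqF uv.
case: (classic (exists w, e v w /\ w != u)) => [[w [evw wu]]|nw].
  have wS := nb w evw.
  have fw : psd_force e S w v.
    by split => //; [rewrite e_sym | move=> w' sw' _; exact: Hc].
  have m1 := swap_min mS f. have m2 := swap_min mS fw.
  have wv : w != v by apply/eqP=> E; move: vS; rewrite -E wS.
  have [wv1 wv2] := neqF wv. have [wu1 wu2] := neqF wu.
  have D := (uv1, uv2, wv1, wv2, wu1, wu2, uS, wS, negbTE vS).
  apply: (cyc3 mS m1 m2).
  - exact: te_swap.
  - apply: (te_adjI (a := w) (b := u)); rewrite /swap; try by rewrite !inE ?eqxx ?D.
    by move=> z zw zu; rewrite !inE (negbTE zw) (negbTE zu).
  - exact/te_adj_sym/te_swap.
  - rewrite eq_sym; apply: (neq_wit (z := v)); by rewrite /swap ?inE ?eqxx ?D.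
  - apply: (neq_wit (z := w)); by rewrite /swap ?inE ?eqxx ?D.
  - rewrite eq_sym; apply: (neq_wit (z := v)); by rewrite /swap ?inE ?eqxx ?D.
have Hl : forall c, e v c -> c = u.
  move=> c evc; apply: NNPP => cu; apply: nw; exists c; split=> //; exact/eqP.
case: (classic (exists w, e u w /\ w != v)) => [[w [euw wv]]|nw2]; last first.
  exfalso.
  have cl : forall y, connect e v y -> y = u \/ y = v.
    move=> y; apply: (@conn_ind _ (fun y => y = u \/ y = v)); first by right.
    move=> a b [->|->] eab; last by left; exact: Hl.
    right; apply: NNPP => bv; apply: nw2; exists b; split=> //; exact/eqP.
  have sub : [set y | connect e x0 y] \subset [set u; v].
    apply/subsetP=> y; rewrite !inE => cy.
    have cvy : connect e v y by apply: connect_trans _ cy; rewrite (sym_connect_sym e_sym).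
    by case: (cl y cvy) => ->; rewrite eqxx ?orbT.
  have := leq_trans K3 (subset_leq_card sub); rewrite cards2; by case: (u != v).
have wu : w != u by apply/eqP=> E; subst w; rewrite e_irr in euw.
have [wu1 wu2] := neqF wu.
case: (classic (exists d, d \notin S /\ d != v)) => [[d [dS dv]]|nd]; last first.
  exfalso.
  have inS : forall z, z != v -> z \in S.
    move=> z zv; case: (boolP (z \in S)) => // zS; case: nd; by exists z.
  set B0 := [set: T] :\ v :\ w.
  have fa : psd_force e B0 u v.
    split.
    - by rewrite !inE eq_sym wu uv.
    - by rewrite !inE eqxx andbF.
    - exact: euv.
    move=> w' sw' _; apply: (comp_single _ sw') => c evc.
    by rewrite (Hl c evc) !inE ?wu2 ?uv1.
  have fb : psd_force e (v |: B0) u w.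
    split.
    - by rewrite !inE ?wu2 ?uv1.
    - by rewrite !inE eqxx (negbTE wv).
    - exact: euw.
    move=> w' sw' _; apply: (comp_single _ sw') => c ewc.
    have cw : c != w by apply/eqP=> E; subst c; rewrite e_irr in ewc.
    by rewrite !inE cw /=; case: (c == v).
  have E : w |: (v |: B0) = [set: T].
    apply/setP=> z; rewrite !inE; case: (z == w) => //=; by case: (z == v).
  have r : psd_forcing_set e B0.
    by rewrite /psd_forcing_set -E; apply: psd_reach_step fb; apply: psd_reach_step fa; constructor.
  have le := mS.2 _ r.
  have pr : B0 \proper S.
    apply/properP; split.
      by apply/subsetP=> z; rewrite !inE => /and3P[_ zv _]; exact: inS.
    by exists w; [exact: inS | rewrite !inE eqxx].
  by have := proper_card pr; rewrite ltnNge le.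
have [y [x [f' sdx]]] := comp_force mS.1 dS.
have xv : x != v.
  apply/eqP=> E; subst x; have := Hc d (same_comp_sym sdx).
  by move=> E; rewrite E eqxx in dv.
have [yS xS eyx uqy] := f'.
have yv : y != v by apply/eqP=> E; move: vS; rewrite -E yS.
have xu : x != u by apply/eqP=> E; move: xS; rewrite E uS.
have xy : x != y by apply/eqP=> E; move: xS; rewrite E yS.
have [xv1 xv2] := neqF xv. have [yv1 yv2] := neqF yv.
have [xu1 xu2] := neqF xu. have [xy1 xy2] := neqF xy.
have m1 := swap_min mS f.
case: (eqVneq y u) => [Eyu|yu].
  subst y.
  have m2 := swap_min mS f'.
  have D := (uv1, uv2, xv1, xv2, xu1, xu2, uS, negbTE xS, negbTE vS).
  apply: (cyc3 mS m1 m2).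
  - exact: te_swap.
  - apply: (te_adjI (a := v) (b := x)); rewrite /swap; try by rewrite !inE ?eqxx ?D.
    by move=> z zv zx; rewrite !inE (negbTE zv) (negbTE zx).
  - exact/te_adj_sym/te_swap.
  - rewrite eq_sym; apply: (neq_wit (z := v)); by rewrite /swap ?inE ?eqxx ?D.
  - apply: (neq_wit (z := v)); by rewrite /swap ?inE ?eqxx ?D.
  - rewrite eq_sym; apply: (neq_wit (z := x)); by rewrite /swap ?inE ?eqxx ?D.
have [yu1 yu2] := neqF yu.
have D := (uv1, uv2, xv1, xv2, xu1, xu2, xy1, xy2, yv1, yv2, yu1, yu2, uS, yS, negbTE xS, negbTE vS).
set S2 := swap S y x.
have f2 : psd_force e S2 u v.
  split.
  - by rewrite /S2 /swap !inE ?D.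
  - by rewrite /S2 /swap !inE ?D.
  - exact: euv.
  move=> w' sw' _; apply: (comp_single _ sw') => c evc.
  by rewrite (Hl c evc) /S2 /swap !inE ?D.
have m2 := swap_min mS f'.
have m12 := swap_min m2 f2.
have [uS2 vS2 _ _] := f2.
apply: (cyc4 mS m1 m12 m2).
- exact: te_swap.
- apply: (te_adjI (a := y) (b := x)); rewrite /S2 /swap; try by rewrite !inE ?eqxx ?D.
  by move=> z zy zx; rewrite !inE (negbTE zy) (negbTE zx).
- exact/te_adj_sym/te_swap.
- exact/te_adj_sym/te_swap.
- rewrite eq_sym; apply: (neq_wit (z := v)); by rewrite /S2 /swap ?inE ?eqxx ?D.
- rewrite eq_sym; apply: (neq_wit (z := v)); by rewrite /S2 /swap ?inE ?eqxx ?D.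
- rewrite eq_sym; apply: (neq_wit (z := x)); by rewrite /S2 /swap ?inE ?eqxx ?D.
- rewrite eq_sym; apply: (neq_wit (z := x)); by rewrite /S2 /swap ?inE ?eqxx ?D.
- apply: (neq_wit (z := v)); by rewrite /S2 /swap ?inE ?eqxx ?D.
- apply: (neq_wit (z := v)); by rewrite /S2 /swap ?inE ?eqxx ?D.
Qed.

End Proofs.


Unset Implicit Arguments.
Theorem theorem4p8 (T : finType) (e : rel T)
  (e_sym : symmetric e) (e_irr : irreflexive e)
  (H : (exists u1 v1 u2 v2, [/\ e u1 v1, e u2 v2 & ~~ connect e u1 u2])
       \/ (exists x : T, 3 <= #|[set y | connect e x y]|)) :
  ~ TE_is_tree e.
Proof.
move=> [_ [_ hc]]; apply: hc.
case: H => [[u1 [v1 [u2 [v2 [h1 h2 h3]]]]]|[x0 K3]].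
  exact: (case2 e_sym e_irr h1 h2 h3).
have [y cy yx] : exists2 y, connect e x0 y & y != x0.
  apply: NNPP => nE.
  have sub : [set y | connect e x0 y] \subset [set x0].
    apply/subsetP=> y; rewrite !inE => cy; apply: NNPP => yx; apply: nE; exists y => //; exact/negP.
  by have := leq_trans K3 (subset_leq_card sub); rewrite cards1.
move/connectP: cy => [[|b p] /= pth ey]; first by rewrite ey eqxx in yx.
case/andP: pth => eb _.
have [S mS] := ex_min e.
have [y' [x [f cx]]] := edge_force e_sym e_irr mS eb.
exact: (case1 e_sym e_irr K3 mS f cx (leqnn _)).
Qed.
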